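(* Let $\mathbb{F}_q$ be a finite field, $n\ge1$, and let $C\le \mathbb{F}_q^n$ be a linear code which is an abelian group code. Let $G$ be a regular subgroup of $S_n$ such that $\langle G, C_{S_n}(G)\rangle \le \mathrm{PAut}(C)$, and such that $C$ is permutation equivalent to some ideal of the group algebra $\mathbb{F}_q[G]$ on which the derived subgroup $G'$ acts trivially from the left (respectively, from the right). If $G'\neq\{1\}$, then there exist positive integers $s,t>1$ with $s\cdot t=n$ such that $C$ is permutation equivalent to a linear subspace of $\bigoplus_{i=1}^{s}\mathrm{Rep}_t(\mathbb{F}_q)\le\mathbb{F}_q^{st}$.
   Context: All groups are finite. $\mathcal{B}=\{e_1,\dots,e_n\}$ is the standard basis of $\mathbb{F}_q^n$. A permutation $\sigma\in S_n$ acts on $\mathbb{F}_q^n$ by $\sigma(\sum a_ie_i)=\sum a_i e_{\sigma(i)}$; two codes $C,C'\le\mathbb{F}_q^n$ are permutation equivalent if $\sigma(C)=C'$ for some $\sigma\in S_n$; $\mathrm{PAut}(C)=\{\sigma\in S_n:\sigma(C)=C\}$. A subgroup of $S_n$ is regular if it has order $n$ and acts transitively on $\{1,\dots,n\}$; $C_{S_n}(G)$ is the centralizer of $G$ in $S_n$. For a group $H$ of order $n$, $C$ is an $H$-code if there is a bijection $\phi:\mathcal{B}\to H$ whose $\mathbb{F}_q$-linear extension $\tilde\phi:\mathbb{F}_q^n\to\mathbb{F}_q[H]$ maps $C$ onto a two-sided ideal of $\mathbb{F}_q[H]$; $C$ is an abelian group code if it is an $H$-code for some abelian $H$. $C$ is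 permutation equivalent to an ideal $I$ of $\mathbb{F}_q[G]$ if there is a bijection $\phi:\mathcal{B}\to G$ with $\tilde\phi(C)=I$. A subgroup $U\le G$ acts trivially from the left (right) on $X\subseteq\mathbb{F}_q[G]$ if $ux=x$ (resp. $xu=x$) for all $u\in U,x\in X$. $\mathrm{Rep}_t(\mathbb{F}_q)=\{(\lambda,\dots,\lambda):\lambda\in\mathbb{F}_q\}\le\mathbb{F}_q^t$ is the repetition code of length $t$. *)

(* Defs.v *)
From HB Require Import structures.
From mathcomp Require Import all_boot all_order all_algebra all_fingroup all_solvable.
Set Implicit Arguments. Unset Strict Implicit. Unset Printing Implicit Defensive.
Import GRing.Theory.
Local Open Scope ring_scope.


Section Codes.
Variable F : finFieldType.

(* action of sigma on F^n: sigma (sum a_i e_i) = sum a_i e_(sigma i),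
   i.e. (sigma v)_j = v_(sigma^-1 j) *)
Definition permv n (s : {perm 'I_n}) (v : 'rV[F]_n) : 'rV[F]_n :=
  \row_j v 0 ((s^-1)%g j).

Definition pimage n (s : {perm 'I_n}) (C : {vspace 'rV[F]_n}) : {set 'rV[F]_n} :=
  [set permv s v | v in C].

Definition perm_equiv n (C D : {vspace 'rV[F]_n}) : Prop :=
  exists s : {perm 'I_n}, pimage s C = [set v | v \in D].

Definition PAut n (C : {vspace 'rV[F]_n}) : {set {perm 'I_n}} :=
  [set s : {perm 'I_n} | pimage s C == [set v | v \in C]].

Definition regular n (G : {group {perm 'I_n}}) : Prop :=
  #|G| = n /\ [transitive G, on [set: 'I_n] | 'P].

Section GroupAlgebra.
Variable gT : finGroupType.
Variable H : {group gT}.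

Definition galg : {set {ffun gT -> F}} :=
  [set a : {ffun gT -> F} | [forall g, (g \notin H) ==> (a g == 0)]].

Definition galg_mul (a b : {ffun gT -> F}) : {ffun gT -> F} :=
  [ffun g => \sum_(h in H) a h * b ((h^-1 * g)%g)].

Definition galg_delta (u : gT) : {ffun gT -> F} := [ffun g => (g == u)%:R].

Definition is_ideal (I : {set {ffun gT -> F}}) : Prop :=
  [/\ I \subset galg, 0 \in I,
      {in I &, forall a b, a + b \in I} &
      forall x a, x \in galg -> a \in I ->
        galg_mul x a \in I /\ galg_mul a x \in I].

Definition left_trivial (U : {set gT}) (X : {set {ffun gT -> F}}) : Prop :=
  forall u x, u \in U -> x \in X -> galg_mul (galg_delta u) x = x.

Definition right_trivial (U : {set gT}) (X : {set {ffun gT -> F}}) : Prop :=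
  forall u x, u \in U -> x \in X -> galg_mul x (galg_delta u) = x.

(* linear extension of phi : B -> H, identifying e_i with i *)
Definition phit n (phi : 'I_n -> gT) (v : 'rV[F]_n) : {ffun gT -> F} :=
  [ffun g => \sum_(i | phi i == g) v 0 i].

Definition basis_bij n (phi : 'I_n -> gT) : Prop :=
  injective phi /\ phi @: [set: 'I_n] = H.

Definition perm_equiv_ideal n (C : {vspace 'rV[F]_n}) (I : {set {ffun gT -> F}}) :=
  exists phi : 'I_n -> gT, basis_bij phi /\ [set phit phi v | v in C] = I.

Definition group_code n (C : {vspace 'rV[F]_n}) : Prop :=
  #|H| = n /\ exists I, is_ideal I /\ perm_equiv_ideal C I.

End GroupAlgebra.

Definition abelian_group_code n (C : {vspace 'rV[F]_n}) : Prop :=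
  exists (gT : finGroupType) (H : {group gT}), abelian H /\ group_code H C.

(* the code Rep_t + ... + Rep_t (s copies) in F^(s t): coordinate j lies in
   block j %/ t, and vectors are constant on blocks *)
Definition in_rep_sum n (t : nat) (v : 'rV[F]_n) : Prop :=
  forall j k : 'I_n, (j %/ t = k %/ t)%N -> v 0 j = v 0 k.

End Codes.

(* Main.v *)
Require Import Defs.
From HB Require Import structures.
From mathcomp Require Import all_boot all_order all_algebra all_fingroup all_solvable.
From mathcomp Require Import zify.
Set Implicit Arguments. Unset Strict Implicit. Unset Printing Implicit Defensive.


Section Helpers.
Import GRing.Theory.
Local Open Scope ring_scope.

Lemma key_perm (gT : finGroupType) (G : {set gT}) (cos : gT -> {set gT})
  (n s t : nat) (phi : 'I_n -> gT) :
  injective phi -> phi @: setT = G ->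
  (forall g, g \in G -> g \in cos g) ->
  (forall g, g \in G -> #|cos g| = t) ->
  (forall g h, g \in G -> h \in cos g -> cos h = cos g) ->
  (forall g, g \in G -> cos g \subset G) ->
  #|cos @: G| = s -> n = (s * t)%N -> (0 < t)%N ->
  exists tau : 'S_n, forall j k : 'I_n, (j %/ t = k %/ t)%N ->
     phi (tau k) \in cos (phi (tau j)).
Proof.
move=> phiI phiG cosr cosc cost cosS cardR ndef tpos.
have phiin i : phi i \in G by rewrite -phiG; apply: imset_f; rewrite inE.
set R := enum (cos @: G).
pose f (i : 'I_n) := (index (cos (phi i)) R, index (phi i) (enum (cos (phi i)))).
pose g (j : 'I_n) := (j %/ t, j %% t)%N.
have cosR i : cos (phi i) \in R by rewrite mem_enum; apply: imset_f.
have peq : perm_eq (map g (enum 'I_n)) [tuple f i | i < n].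
  apply: uniq_perm.
  - rewrite map_inj_uniq ?enum_uniq // => j k [] e1 e2.
    by apply: val_inj; rewrite /= (divn_eq j t) (divn_eq k t) e1 e2.
  - rewrite /= map_inj_uniq ?enum_uniq // => i i' [] e1 e2.
    have ec : cos (phi i) = cos (phi i').
      by rewrite -(nth_index set0 (cosR i)) e1 nth_index.
    apply: phiI.
    rewrite -(nth_index (phi i) (x:=phi i) (s:= enum (cos (phi i)))); last by rewrite mem_enum cosr.
    rewrite e2 ec nth_index // mem_enum cosr //.
  - move=> [b k]; apply/idP/idP.
    + case/mapP => j _ [-> ->]; apply/mapP.
      have jlt : (j %/ t < s)%N by rewrite ltn_divLR // -ndef.
      have jm : (j %% t < t)%N by rewrite ltn_pmod.
      have bs : (j %/ t < size R)%N by rewrite -cardE cardR.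
      set c := nth set0 R (j %/ t).
      have cR : c \in R by apply: mem_nth.
      move: (cR); rewrite mem_enum => /imsetP [g0 g0G ce].
      have kc : (j %% t < size (enum c))%N by rewrite -cardE ce cosc.
      set h := nth g0 (enum c) (j %% t).
      have hc : h \in c by rewrite -mem_enum mem_nth.
      have : h \in phi @: setT by rewrite phiG; apply: (subsetP (cosS g0 g0G)); rewrite -ce.
      case/imsetP => i _ hi.
      exists i; first by rewrite ?mem_enum.
      have e : cos (phi i) = c by rewrite -hi ce (cost g0 h) // -ce.
      rewrite /f e -hi index_uniq ?enum_uniq //.
      by rewrite /c index_uniq // /R enum_uniq.
    + rewrite /=; case/mapP => i _ [-> ->]; apply/mapP.
      have bs : (index (cos (phi i)) R < s)%N by rewrite -cardR cardE index_mem.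
      have ks : (index (phi i) (enum (cos (phi i))) < t)%N.
        by rewrite -(cosc (phi i)) // cardE index_mem mem_enum cosr.
      have lt : (index (cos (phi i)) R * t + index (phi i) (enum (cos (phi i))) < n)%N.
        rewrite ndef; nia.
      exists (Ordinal lt); first by rewrite mem_enum.
      by rewrite /g /= divnMDl // modnMDl divn_small // modn_small // addn0.
case/tuple_permP: peq => p pe.
have pg j : g j = f (p j).
  have := congr1 (fun s => nth (0,0)%N s j) pe.
  rewrite /= (nth_map j) ?size_enum_ord // nth_ord_enum.
  by rewrite (nth_map j) ?size_enum_ord // nth_ord_enum tnth_mktuple.
exists p => j k ejk.
have : (f (p j)).1 = (f (p k)).1 by rewrite -!pg /g /= ejk.
rewrite /= => e.
have ec : cos (phi (p j)) = cos (phi (p k)).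
  by rewrite -(nth_index set0 (cosR (p j))) e nth_index.
by rewrite ec cosr.
Qed.


Lemma permvE (F : finFieldType) n (s : {perm 'I_n}) (v : 'rV[F]_n) :
  permv s v = (v *m perm_mx s)%R.
Proof.
rewrite -[s in perm_mx s]invgK -col_permE; apply/rowP => j; rewrite !mxE.
by [].
Qed.

Lemma finish (F : finFieldType) n (C : {vspace 'rV[F]_n}) (gT : finGroupType)
  (G : {set gT}) (cos : gT -> {set gT}) (phi : 'I_n -> gT) (s t : nat) :
  injective phi -> phi @: setT = G ->
  (forall g, g \in G -> g \in cos g) ->
  (forall g, g \in G -> #|cos g| = t) ->
  (forall g h, g \in G -> h \in cos g -> cos h = cos g) ->
  (forall g, g \in G -> cos g \subset G) ->
  #|cos @: G| = s -> n = (s * t)%N -> (0 < t)%N ->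
  (forall v i i', v \in C -> phi i' \in cos (phi i) -> v 0 i' = v 0 i) ->
  exists D : {vspace 'rV[F]_n},
      (forall v, v \in D -> in_rep_sum t v) /\ perm_equiv C D.
Proof.
move=> phiI phiG cosr cosc cost cosS cardR ndef tpos Hv.
have [tau Htau] := key_perm phiI phiG cosr cosc cost cosS cardR ndef tpos.
pose sig := (tau^-1)%g.
exists (linfun (mulmxr (perm_mx sig)) @: C)%VS; split.
  move=> v /memv_imgP [w wC ->] j k ejk.
  rewrite !lfunE /= -permvE !mxE /sig invgK.
  by rewrite (Hv w (tau j) (tau k)) // Htau.
exists sig; apply/setP => v; rewrite inE; apply/imsetP/memv_imgP.
  by case=> w wC ->; exists w => //; rewrite lfunE /= permvE.
by case=> w wC ->; exists w => //; rewrite lfunE /= permvE.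
Qed.

Lemma phitE (F : finFieldType) (gT : finGroupType) n (phi : 'I_n -> gT) (v : 'rV[F]_n) i :
  injective phi -> phit phi v (phi i) = v 0 i.
Proof. by move=> phiI; rewrite ffunE (big_pred1 i) // => j; exact: (inj_eq phiI). Qed.

Lemma left_eval (F : finFieldType) (gT : finGroupType) (G : {group gT}) (u : gT) (x : {ffun gT -> F}) g :
  u \in G -> galg_mul G (galg_delta F u) x g = x ((u^-1 * g)%g).
Proof.
move=> uG; rewrite ffunE (bigD1 u) //= ffunE eqxx mul1r big1 ?addr0 // => h /andP[_ hu].
by rewrite ffunE (negbTE hu) mul0r.
Qed.

Lemma right_eval (F : finFieldType) (gT : finGroupType) (G : {group gT}) (u : gT) (x : {ffun gT -> F}) g :
  u \in G -> g \in G -> galg_mul G x (galg_delta F u) g = x ((g * u^-1)%g).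
Proof.
move=> uG gG; rewrite ffunE (bigD1 (g * u^-1)%g) ?groupM ?groupV //= ffunE.
rewrite invMg invgK -mulgA mulVg mulg1 eqxx mulr1 big1 ?addr0 // => h /andP[_ hu].
rewrite ffunE; case: eqP => [e|]; last by rewrite mulr0.
by case/eqP: hu; rewrite -e invMg invgK mulgA mulgV mul1g.
Qed.

End Helpers.

Theorem corollary2 (F : finFieldType) (n : nat) (C : {vspace 'rV[F]_n})
  (G : {group {perm 'I_n}}) :
  (1 <= n)%N ->
  abelian_group_code C ->
  regular G ->
  (<<G :|: 'C(G)>> \subset PAut C)%g ->
  (exists I : {set {ffun {perm 'I_n} -> F}},
     [/\ is_ideal G I, perm_equiv_ideal G C I &
         left_trivial G ((G^`(1))%g) I \/ right_trivial G ((G^`(1))%g) I]) ->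
  (G^`(1) != 1)%g ->
  exists s t : nat, [/\ (1 < s)%N, (1 < t)%N, (s * t)%N = n &
    exists D : {vspace 'rV[F]_n},
      (forall v, v \in D -> in_rep_sum t v) /\ perm_equiv C D].
Proof.
Local Open Scope group_scope.
move=> n1 _ [cardG _] _ [I [Iid [phi [[phiI phiG] Iim]] triv]] Gd.
have /trivgPn [a aD a1] := Gd.
pose K := <[a]>%G.
have KD : (K \subset G^`(1))%g by rewrite cycle_subG.
have KG : K \subset G := subset_trans KD (der_sub 1 G).
have tpos : (0 < #|K|)%N by apply: cardG_gt0.
have ndef : n = (#|G : K| * #|K|)%N by rewrite mulnC (Lagrange KG) cardG.
have t1 : (1 < #|K|)%N by rewrite order_gt1.
have s1 : (1 < #|G : K|)%N.
  have s0 := indexg_gt0 G K.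
  case: (ltngtP #|G : K| 1) => // [|/eqP]; first by rewrite ltnS leqn0 => /eqP e; rewrite e in s0.
  rewrite indexg_eq1 => GK.
  have /derG1P e : abelian G by apply: abelianS GK (cycle_abelian a).
  by rewrite e eqxx in Gd.
exists #|G : K|, #|K|; split => //.
have phiin i : phi i \in G by rewrite -phiG; apply: imset_f; rewrite inE.
have xI v : v \in C -> phit phi v \in I by move=> vC; rewrite -Iim; apply: imset_f.
case: triv => [lt | rt].
- apply: (@finish F n C _ G (fun g => K :* g)%g phi #|G : K|) => //.
  + by move=> g _; apply: rcoset_refl.
  + by move=> g _; rewrite card_rcoset.
  + by move=> g h _ /rcoset_eqP.
  + move=> g gG; apply/subsetP => h /rcosetP [k kK ->].
    by rewrite groupM // (subsetP KG).
  + by rewrite /indexg /rcosets (eq_imset _ (rcosetE K)).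
  + move=> v i i' vC /rcosetP [k kK e].
    rewrite -(phitE v i' phiI) -(phitE v i phiI) e.
    have kD : (k^-1 \in G^`(1))%g by rewrite groupV (subsetP KD).
    have := lt _ _ kD (xI v vC).
    move/(congr1 (fun y : {ffun {perm 'I_n} -> F} => y (phi i))).
    rewrite left_eval ?invgK //.
    by rewrite groupV (subsetP KG).
- apply: (@finish F n C _ G (fun g => g *: K)%g phi #|G : K|) => //.
  + by move=> g _; apply: lcoset_refl.
  + by move=> g _; rewrite card_lcoset.
  + by move=> g h _ /lcoset_eqP.
  + move=> g gG; apply/subsetP => h /lcosetP [k kK ->].
    by rewrite groupM // (subsetP KG).
  + by rewrite -card_lcosets /lcosets (eq_imset _ (lcosetE K)).
  + move=> v i i' vC /lcosetP [k kK e].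
    rewrite -(phitE v i' phiI) -(phitE v i phiI) e.
    have kD : (k^-1 \in G^`(1))%g by rewrite groupV (subsetP KD).
    have := rt _ _ kD (xI v vC).
    move/(congr1 (fun y : {ffun {perm 'I_n} -> F} => y (phi i))).
    rewrite right_eval ?invgK //.
    by rewrite groupV (subsetP KG).
Qed.
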